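(* Let $S\subset\mathbb{C}^4$ be the surface parametrized by $(a,t)\mapsto(a,t^4,at^6,t^7)$. Then $S$ is Whitney regular along its singular locus (the first coordinate axis). However, the surface parametrized by $\tau(a,t)=(a,t^4,at^2,t^3)$ (which is the blow-up of $S$ along its singular locus) and the surface parametrized by $\sigma(a,t)=(a,t^4,\tfrac32at^2,\tfrac74t^3)$ (which is the Nash modification of $S$) are not Whitney regular along their singular locus, the first coordinate axis.
   Context: Whitney regularity along the singular locus $\mathcal{C}$ at $0$: for all sequences $x_n\in S\setminus\mathcal{C}$, $y_n\in\mathcal{C}\setminus\{0\}$ converging to $0$ with secants $\overline{x_ny_n}\to l$ and tangent planes $T_{x_n}S\to T$, one has $T_0\mathcal{C}\subset T$ and $l\subset T$. *)

(* Defs.v *)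
From Stdlib Require Import Reals.
Open Scope R_scope.

Record C := mkC { Re : R; Im : R }.
Definition C0 : C := mkC 0 0.
Definition C1 : C := mkC 1 0.
Definition RtoC (r : R) : C := mkC r 0.
Definition Cadd (z w : C) : C := mkC (Re z + Re w) (Im z + Im w).
Definition Copp (z : C) : C := mkC (- Re z) (- Im z).
Definition Csub (z w : C) : C := Cadd z (Copp w).
Definition Cmul (z w : C) : C :=
  mkC (Re z * Re w - Im z * Im w) (Re z * Im w + Im z * Re w).
Definition Cnorm2 (z : C) : R := Re z * Re z + Im z * Im z.
Definition Cinv (z : C) : C := mkC (Re z / Cnorm2 z) (- Im z / Cnorm2 z).
Fixpoint Cpow (z : C) (n : nat) : C :=
  match n with O => C1 | S m => Cmul z (Cpow z m) end.

Record V4 := mkV4 { v1 : C; v2 : C; v3 : C; v4 : C }.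
Definition V0 : V4 := mkV4 C0 C0 C0 C0.
Definition vadd (x y : V4) : V4 :=
  mkV4 (Cadd (v1 x) (v1 y)) (Cadd (v2 x) (v2 y)) (Cadd (v3 x) (v3 y)) (Cadd (v4 x) (v4 y)).
Definition vscale (c : C) (x : V4) : V4 :=
  mkV4 (Cmul c (v1 x)) (Cmul c (v2 x)) (Cmul c (v3 x)) (Cmul c (v4 x)).
Definition vsub (x y : V4) : V4 := vadd x (vscale (Copp C1) y).
Definition vnorm2 (x : V4) : R :=
  Cnorm2 (v1 x) + Cnorm2 (v2 x) + Cnorm2 (v3 x) + Cnorm2 (v4 x).

Definition vconv (u : nat -> V4) (l : V4) : Prop :=
  forall eps, 0 < eps -> exists N : nat, forall n, (N <= n)%nat -> vnorm2 (vsub (u n) l) < eps.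

Definition in_span2 (e f z : V4) : Prop :=
  exists al be : C, z = vadd (vscale al e) (vscale be f).
Definition lin_indep2 (e f : V4) : Prop :=
  forall al be : C, vadd (vscale al e) (vscale be f) = V0 -> al = C0 /\ be = C0.

Definition has_pderiv_a (phi : C -> C -> V4) (a t : C) (d : V4) : Prop :=
  forall eps, 0 < eps -> exists delta, 0 < delta /\
    forall h, h <> C0 -> Cnorm2 h < delta ->
      vnorm2 (vsub (vscale (Cinv h) (vsub (phi (Cadd a h) t) (phi a t))) d) < eps.
Definition has_pderiv_t (phi : C -> C -> V4) (a t : C) (d : V4) : Prop :=
  forall eps, 0 < eps -> exists delta, 0 < delta /\
    forall h, h <> C0 -> Cnorm2 h < delta ->
      vnorm2 (vsub (vscale (Cinv h) (vsub (phi a (Cadd t h)) (phi a t))) d) < eps.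

Definition tangent_plane (phi : C -> C -> V4) (a t : C) (z : V4) : Prop :=
  exists da dt, has_pderiv_a phi a t da /\ has_pderiv_t phi a t dt /\ in_span2 da dt z.

Definition on_axis (x : V4) : Prop := v2 x = C0 /\ v3 x = C0 /\ v4 x = C0.
Definition e1 : V4 := mkV4 C1 C0 C0 C0.

(** Points x_n of S \ C are written x_n = phi (a n) (t n).
    The limit secant line l is represented by a nonzero vector v (l = C v), and
    secants converge to l iff suitable representatives c_n (x_n - y_n) converge to v.
    The limit plane T is represented by a basis (e,f), and T_{x_n}S converge to T
    iff there are bases (P n, Q n) of T_{x_n}S converging to (e,f). *)
Definition whitney_at (phi : C -> C -> V4) (p : V4) : Prop :=
  forall (a t : nat -> C) (y : nat -> V4) (c : nat -> C) (v e f : V4) (P Q : nat -> V4),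
    (forall n, ~ on_axis (phi (a n) (t n))) ->
    (forall n, on_axis (y n) /\ y n <> p) ->
    vconv (fun n => phi (a n) (t n)) p ->
    vconv y p ->
    v <> V0 ->
    vconv (fun n => vscale (c n) (vsub (phi (a n) (t n)) (y n))) v ->
    lin_indep2 e f ->
    (forall n z, tangent_plane phi (a n) (t n) z <-> in_span2 (P n) (Q n) z) ->
    vconv P e -> vconv Q f ->
    (* T_p C = C e1 is contained in T, and l is contained in T *)
    in_span2 e f e1 /\ in_span2 e f v.

Definition whitney_along_axis (phi : C -> C -> V4) : Prop :=
  forall p, on_axis p -> whitney_at phi p.

Definition phiS (a t : C) : V4 := mkV4 a (Cpow t 4) (Cmul a (Cpow t 6)) (Cpow t 7).
Definition phiTau (a t : C) : V4 := mkV4 a (Cpow t 4) (Cmul a (Cpow t 2)) (Cpow t 3).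
Definition phiSigma (a t : C) : V4 :=
  mkV4 a (Cpow t 4) (Cmul (RtoC (3/2)) (Cmul a (Cpow t 2))) (Cmul (RtoC (7/4)) (Cpow t 3)).

(* Main.v *)
From Stdlib Require Import Reals Lra Lia Psatz Classical.
From Coquelicot Require Import Rcomplements Lim_seq Rbar Hierarchy.
Require Import Defs.
Open Scope R_scope.


Lemma C_ext z w : Re z = Re w -> Im z = Im w -> z = w.
Proof. destruct z, w; simpl; intros; subst; auto. Qed.
Lemma V4_ext x y : v1 x = v1 y -> v2 x = v2 y -> v3 x = v3 y -> v4 x = v4 y -> x = y.
Proof. destruct x, y; simpl; intros; subst; auto. Qed.
Ltac ceq := apply C_ext; simpl; ring.
Ltac veq := apply V4_ext; simpl; ceq.

Lemma Cnorm2_nonneg z : 0 <= Cnorm2 z.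
Proof. unfold Cnorm2; pose proof (Rle_0_sqr (Re z)); pose proof (Rle_0_sqr (Im z)); unfold Rsqr in *; lra. Qed.
Lemma Cnorm2_mul z w : Cnorm2 (Cmul z w) = Cnorm2 z * Cnorm2 w.
Proof. unfold Cnorm2; simpl; ring. Qed.
Lemma Cnorm2_add z w : Cnorm2 (Cadd z w) <= 2 * Cnorm2 z + 2 * Cnorm2 w.
Proof. unfold Cnorm2; simpl.
  pose proof (Rle_0_sqr (Re z - Re w)); pose proof (Rle_0_sqr (Im z - Im w)); unfold Rsqr in *; lra. Qed.
Lemma Cnorm2_eq0 z : Cnorm2 z = 0 -> z = C0.
Proof. unfold Cnorm2; intros.
  assert (A1: Re z * Re z = 0) by (pose proof (Rle_0_sqr (Re z)); pose proof (Rle_0_sqr (Im z)); unfold Rsqr in *; lra).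
  assert (A2: Im z * Im z = 0) by (pose proof (Rle_0_sqr (Re z)); pose proof (Rle_0_sqr (Im z)); unfold Rsqr in *; lra).
  apply C_ext; simpl; [destruct (Rmult_integral _ _ A1)|destruct (Rmult_integral _ _ A2)]; auto. Qed.
Lemma Cnorm2_pos z : z <> C0 -> 0 < Cnorm2 z.
Proof. intros H. destruct (Cnorm2_nonneg z) as [h|h]; auto. exfalso; apply H, Cnorm2_eq0; auto. Qed.
Lemma Cinv_l z : z <> C0 -> Cmul (Cinv z) z = C1.
Proof. intros H. pose proof (Cnorm2_pos z H). unfold Cnorm2 in *.
  apply C_ext; simpl; unfold Cnorm2. all: generalize (Re z) (Im z) H0; intros x y Hp; field; lra. Qed.
Lemma Cnorm2_C0 : Cnorm2 C0 = 0.
Proof. unfold Cnorm2; simpl; ring. Qed.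
Lemma vnorm2_nonneg x : 0 <= vnorm2 x.
Proof. unfold vnorm2; pose proof (Cnorm2_nonneg (v1 x)); pose proof (Cnorm2_nonneg (v2 x));
  pose proof (Cnorm2_nonneg (v3 x)); pose proof (Cnorm2_nonneg (v4 x)); lra. Qed.
Lemma vnorm2_eq0 x : vnorm2 x = 0 -> x = V0.
Proof. unfold vnorm2; intros; pose proof (Cnorm2_nonneg (v1 x)); pose proof (Cnorm2_nonneg (v2 x));
  pose proof (Cnorm2_nonneg (v3 x)); pose proof (Cnorm2_nonneg (v4 x));
  apply V4_ext; simpl; apply Cnorm2_eq0; lra. Qed.
Lemma vnorm2_add x y : vnorm2 (vadd x y) <= 2 * vnorm2 x + 2 * vnorm2 y.
Proof. unfold vnorm2; simpl.
  pose proof (Cnorm2_add (v1 x) (v1 y)); pose proof (Cnorm2_add (v2 x) (v2 y));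
  pose proof (Cnorm2_add (v3 x) (v3 y)); pose proof (Cnorm2_add (v4 x) (v4 y)); lra. Qed.
Lemma vnorm2_scale c x : vnorm2 (vscale c x) = Cnorm2 c * vnorm2 x.
Proof. unfold vnorm2; simpl; rewrite !Cnorm2_mul; ring. Qed.
Lemma vnorm2_V0 : vnorm2 V0 = 0.
Proof. unfold vnorm2, Cnorm2; simpl; ring. Qed.


Definition cconv (u : nat -> C) (l : C) : Prop :=
  is_lim_seq (fun n => Re (u n)) (Re l) /\ is_lim_seq (fun n => Im (u n)) (Im l).

Lemma cconv_const c : cconv (fun _ => c) c.
Proof. split; apply is_lim_seq_const. Qed.
Lemma cconv_add u v l m : cconv u l -> cconv v m -> cconv (fun n => Cadd (u n) (v n)) (Cadd l m).
Proof. intros [A B] [C' D]; split; simpl; apply is_lim_seq_plus'; auto. Qed.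
Lemma cconv_mul u v l m : cconv u l -> cconv v m -> cconv (fun n => Cmul (u n) (v n)) (Cmul l m).
Proof. intros [A B] [C' D]; split; simpl.
  apply is_lim_seq_minus'; apply is_lim_seq_mult'; auto.
  apply is_lim_seq_plus'; apply is_lim_seq_mult'; auto. Qed.
Lemma cconv_inv u l : cconv u l -> l <> C0 -> cconv (fun n => Cinv (u n)) (Cinv l).
Proof. intros [A B] H. pose proof (Cnorm2_pos l H) as P.
  assert (N: is_lim_seq (fun n => Cnorm2 (u n)) (Cnorm2 l)).
  { unfold Cnorm2; apply is_lim_seq_plus'; apply is_lim_seq_mult'; auto. }
  split; simpl; apply is_lim_seq_div'; auto; try lra.
  apply is_lim_seq_opp in B. apply (is_lim_seq_ext _ _ _ (fun n => eq_refl)) in B.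
  simpl in B. exact B. Qed.
Lemma cconv_ext u v l : (forall n, u n = v n) -> cconv u l -> cconv v l.
Proof. intros E [A B]; split; [eapply is_lim_seq_ext; [|exact A]|eapply is_lim_seq_ext; [|exact B]];
  intros; simpl; rewrite E; auto. Qed.
Lemma cconv_ext_ev u v l : eventually (fun n => u n = v n) -> cconv u l -> cconv v l.
Proof. intros [N E] [A B]; split; [eapply is_lim_seq_ext_loc; [|exact A]|eapply is_lim_seq_ext_loc; [|exact B]];
  exists N; intros n Hn; rewrite E; auto. Qed.
Lemma cconv_unique u l m : cconv u l -> cconv u m -> l = m.
Proof. intros [A B] [C' D]. apply is_lim_seq_unique in A, B, C', D.
  apply C_ext. rewrite A in C'; injection C'; auto. rewrite B in D; injection D; auto. Qed.

Definition Csub' := Csub.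
Lemma abs_lt_sq x e : 0 < e -> Rabs x < sqrt e -> x * x < e.
Proof. intros He H. pose proof (sqrt_sqrt e (Rlt_le _ _ He)). pose proof (Rabs_pos x).
  assert (x * x = Rabs x * Rabs x) by (rewrite <- Rabs_mult; rewrite Rabs_right; [auto|nra]).
  nra. Qed.
Lemma sq_lt_abs x e : 0 < e -> x * x < e * e -> Rabs x < e.
Proof. intros He H. destruct (Rcase_abs x); [rewrite Rabs_left|rewrite Rabs_right]; nra. Qed.

Lemma cconv_eps u l : cconv u l <-> forall eps, 0 < eps -> exists N, forall n, (N <= n)%nat -> Cnorm2 (Csub (u n) l) < eps.
Proof. split.
  - intros [A B] eps He. apply is_lim_seq_spec in A, B.
    assert (He2 : 0 < eps/2) by lra.
    assert (Hs : 0 < sqrt (eps/2)) by (apply sqrt_lt_R0; lra).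
    destruct (A (mkposreal _ Hs)) as [N1 H1]. destruct (B (mkposreal _ Hs)) as [N2 H2].
    exists (Nat.max N1 N2). intros n Hn. simpl in *.
    specialize (H1 n ltac:(lia)). specialize (H2 n ltac:(lia)).
    apply abs_lt_sq in H1; auto. apply abs_lt_sq in H2; auto.
    unfold Cnorm2; simpl. lra.
  - intros H. split; apply is_lim_seq_spec; intros eps; destruct eps as [e He]; simpl;
    destruct (H (e*e) ltac:(nra)) as [N HN]; exists N; intros n Hn; specialize (HN n Hn);
    unfold Cnorm2 in HN; simpl in HN; apply sq_lt_abs; auto;
    pose proof (Rle_0_sqr (Re (u n) + - Re l)); pose proof (Rle_0_sqr (Im (u n) + - Im l)); unfold Rsqr in *; nra.
Qed.

Lemma vnorm2_sub x y : vnorm2 (vsub x y) = Cnorm2 (Csub (v1 x) (v1 y)) + Cnorm2 (Csub (v2 x) (v2 y))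
   + Cnorm2 (Csub (v3 x) (v3 y)) + Cnorm2 (Csub (v4 x) (v4 y)).
Proof. unfold vnorm2, Cnorm2; simpl; ring. Qed.

Lemma vconv_iff u l : vconv u l <-> cconv (fun n => v1 (u n)) (v1 l) /\ cconv (fun n => v2 (u n)) (v2 l)
  /\ cconv (fun n => v3 (u n)) (v3 l) /\ cconv (fun n => v4 (u n)) (v4 l).
Proof. unfold vconv; rewrite !cconv_eps. split.
  - intros H; repeat split; intros eps He; destruct (H eps He) as [N HN]; exists N; intros n Hn;
    specialize (HN n Hn); rewrite vnorm2_sub in HN;
    pose proof (Cnorm2_nonneg (Csub (v1 (u n)) (v1 l)));
    pose proof (Cnorm2_nonneg (Csub (v2 (u n)) (v2 l)));
    pose proof (Cnorm2_nonneg (Csub (v3 (u n)) (v3 l)));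
    pose proof (Cnorm2_nonneg (Csub (v4 (u n)) (v4 l))); lra.
  - intros [A [B [C' D]]] eps He.
    destruct (A (eps/4) ltac:(lra)) as [N1 H1]; destruct (B (eps/4) ltac:(lra)) as [N2 H2];
    destruct (C' (eps/4) ltac:(lra)) as [N3 H3]; destruct (D (eps/4) ltac:(lra)) as [N4 H4].
    exists (Nat.max (Nat.max N1 N2) (Nat.max N3 N4)); intros n Hn.
    specialize (H1 n ltac:(lia)); specialize (H2 n ltac:(lia)); specialize (H3 n ltac:(lia)); specialize (H4 n ltac:(lia)).
    rewrite vnorm2_sub; lra.
Qed.

Lemma cconv0_iff u : cconv u C0 <-> forall eps, 0 < eps -> exists N, forall n, (N <= n)%nat -> Cnorm2 (u n) < eps.
Proof. rewrite cconv_eps. assert (E: forall z, Csub z C0 = z) by (intros; apply C_ext; simpl; ring).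
  split; intros H eps He; destruct (H eps He) as [N HN]; exists N; intros n Hn; specialize (HN n Hn);
  rewrite ?E in *; auto. Qed.

Lemma cconv_ne0 u l : cconv u l -> l <> C0 -> exists N, forall n, (N <= n)%nat -> u n <> C0.
Proof. intros H Hl. pose proof (Cnorm2_pos l Hl).
  rewrite cconv_eps in H. destruct (H (Cnorm2 l / 4) ltac:(lra)) as [N HN].
  exists N; intros n Hn E. specialize (HN n Hn). rewrite E in HN.
  unfold Cnorm2 in *; simpl in *. nra. Qed.


Definition crd (k : nat) (x : V4) : C :=
  match k with 0 => v1 x | 1 => v2 x | 2 => v3 x | _ => v4 x end.
Lemma crd_lin k a b x y : crd k (vadd (vscale a x) (vscale b y)) = Cadd (Cmul a (crd k x)) (Cmul b (crd k y)).
Proof. destruct k as [|[|[|]]]; reflexivity. Qed.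
Lemma crd_V0 k : crd k V0 = C0.
Proof. destruct k as [|[|[|]]]; reflexivity. Qed.
Lemma V4_ext_crd x y : (forall k, crd k x = crd k y) -> x = y.
Proof. intros H; apply V4_ext; [apply (H 0%nat)|apply (H 1%nat)|apply (H 2%nat)|apply (H 3%nat)]. Qed.
Lemma vconv_crd u l k : vconv u l -> cconv (fun n => crd k (u n)) (crd k l).
Proof. rewrite vconv_iff; intros [A [B [C' D]]]; destruct k as [|[|[|]]]; simpl; auto. Qed.

Lemma cconv_opp u l : cconv u l -> cconv (fun n => Copp (u n)) (Copp l).
Proof. intros [A B]; split; simpl; [apply (is_lim_seq_opp _ (Re l))|apply (is_lim_seq_opp _ (Im l))]; auto. Qed.

Definition minor (e f : V4) (i j : nat) : C :=
  Csub (Cmul (crd i e) (crd j f)) (Cmul (crd j e) (crd i f)).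

Lemma C1_neq_C0 : C1 <> C0.
Proof. intro H. injection H; lra. Qed.
Lemma Copp_eq0 z : Copp z = C0 -> z = C0.
Proof. intro H; apply C_ext; injection H; simpl; lra. Qed.

Lemma minor_nz e f : lin_indep2 e f -> exists i j, minor e f i j <> C0.
Proof. intros H. apply NNPP; intro N.
  assert (M : forall i j, minor e f i j = C0).
  { intros i j; apply NNPP; intro M; apply N; exists i, j; auto. }
  destruct (classic (exists i, crd i e <> C0)) as [[i Hi]|Hn].
  - destruct (H (crd i f) (Copp (crd i e))) as [_ Hb].
    + apply V4_ext_crd; intro k; rewrite crd_lin.
      transitivity (Cmul (Copp C1) (minor e f i k)); [unfold minor; ceq|].
      rewrite M, crd_V0; ceq.
    + apply Hi, Copp_eq0, Hb.
  - assert (E : e = V0).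
    { apply V4_ext_crd; intro k; apply NNPP; intro Hk; apply Hn; exists k; destruct k as [|[|[|]]]; simpl in *; auto. }
    destruct (H C1 C0) as [Ha _].
    + subst e. veq.
    + apply C1_neq_C0, Ha.
Qed.

Lemma cinv_cancel a D : D <> C0 -> Cmul (Cmul a D) (Cinv D) = a.
Proof. intros H. transitivity (Cmul a (Cmul (Cinv D) D)); [ceq|]. rewrite Cinv_l; auto; ceq. Qed.

Lemma span_limit (P Q w : nat -> V4) e f z :
  (forall n, in_span2 (P n) (Q n) (w n)) -> vconv P e -> vconv Q f -> vconv w z ->
  lin_indep2 e f -> in_span2 e f z.
Proof.
  intros Hs HP HQ Hw Hi. destruct (minor_nz e f Hi) as [i [j HD]].
  set (Dn := fun n => minor (P n) (Q n) i j).
  assert (HDn : cconv Dn (minor e f i j)).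
  { unfold Dn, minor, Csub. apply cconv_add; [|apply cconv_opp];
    apply cconv_mul; apply vconv_crd; auto. }
  destruct (cconv_ne0 _ _ HDn HD) as [N HN].
  set (al := fun n => Cmul (Csub (Cmul (crd i (w n)) (crd j (Q n))) (Cmul (crd j (w n)) (crd i (Q n)))) (Cinv (Dn n))).
  set (be := fun n => Cmul (Csub (Cmul (crd i (P n)) (crd j (w n))) (Cmul (crd j (P n)) (crd i (w n)))) (Cinv (Dn n))).
  set (A := Cmul (Csub (Cmul (crd i z) (crd j f)) (Cmul (crd j z) (crd i f))) (Cinv (minor e f i j))).
  set (Bt := Cmul (Csub (Cmul (crd i e) (crd j z)) (Cmul (crd j e) (crd i z))) (Cinv (minor e f i j))).
  assert (Hal : cconv al A).
  { unfold al, A, Csub. apply cconv_mul; [|apply cconv_inv; auto].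
    apply cconv_add; [|apply cconv_opp];
    apply cconv_mul; apply vconv_crd; auto. }
  assert (Hbe : cconv be Bt).
  { unfold be, Bt, Csub. apply cconv_mul; [|apply cconv_inv; auto].
    apply cconv_add; [|apply cconv_opp];
    apply cconv_mul; apply vconv_crd; auto. }
  assert (Heq : forall n k, (N <= n)%nat -> crd k (w n) = Cadd (Cmul (al n) (crd k (P n))) (Cmul (be n) (crd k (Q n)))).
  { intros n k Hn. destruct (Hs n) as [a [b Hab]].
    assert (Ea : al n = a).
    { unfold al. rewrite <- (cinv_cancel a (Dn n)) by (apply HN; auto). f_equal.
      rewrite Hab, !crd_lin. unfold Dn, minor; ceq. }
    assert (Eb : be n = b).
    { unfold be. rewrite <- (cinv_cancel b (Dn n)) by (apply HN; auto). f_equal.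
      rewrite Hab, !crd_lin. unfold Dn, minor; ceq. }
    rewrite Ea, Eb, Hab, crd_lin; auto. }
  exists A, Bt. apply V4_ext_crd; intro k. rewrite crd_lin.
  apply (cconv_unique (fun n => crd k (w n))); [apply vconv_crd; auto|].
  apply cconv_ext_ev with (fun n => Cadd (Cmul (al n) (crd k (P n))) (Cmul (be n) (crd k (Q n)))).
  - exists N; intros n Hn; symmetry; apply Heq; auto.
  - apply cconv_add; apply cconv_mul; auto; apply vconv_crd; auto.
Qed.


Definition Bc (g : C -> C) := exists M, forall h, Cnorm2 h < 1 -> Cnorm2 (g h) <= M.
Lemma Bc_const c : Bc (fun _ => c).
Proof. exists (Cnorm2 c); intros; lra. Qed.
Lemma Bc_id : Bc (fun h => h).
Proof. exists 1; intros; lra. Qed.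
Lemma Bc_add g1 g2 : Bc g1 -> Bc g2 -> Bc (fun h => Cadd (g1 h) (g2 h)).
Proof. intros [M1 H1] [M2 H2]; exists (2*M1+2*M2); intros h Hh.
  pose proof (Cnorm2_add (g1 h) (g2 h)); specialize (H1 h Hh); specialize (H2 h Hh); lra. Qed.
Lemma Bc_mul g1 g2 : Bc g1 -> Bc g2 -> Bc (fun h => Cmul (g1 h) (g2 h)).
Proof. intros [M1 H1] [M2 H2]; exists (M1*M2); intros h Hh. rewrite Cnorm2_mul.
  specialize (H1 h Hh); specialize (H2 h Hh).
  pose proof (Cnorm2_nonneg (g1 h)); pose proof (Cnorm2_nonneg (g2 h)).
  apply Rmult_le_compat; auto. Qed.
Lemma Bc_pow g k : Bc g -> Bc (fun h => Cpow (g h) k).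
Proof. intros H; induction k; simpl. apply Bc_const. apply Bc_mul; auto. Qed.
Ltac bnd := repeat first [apply Bc_const | apply Bc_id | apply Bc_add | apply Bc_mul | apply Bc_pow].

Definition Bv (q : C -> V4) := exists M, forall h, Cnorm2 h < 1 -> vnorm2 (q h) <= M.
Lemma Bv_intro q : Bc (fun h => v1 (q h)) -> Bc (fun h => v2 (q h)) -> Bc (fun h => v3 (q h)) -> Bc (fun h => v4 (q h)) -> Bv q.
Proof. intros [M1 H1] [M2 H2] [M3 H3] [M4 H4]; exists (M1+M2+M3+M4); intros h Hh; unfold vnorm2.
  specialize (H1 h Hh); specialize (H2 h Hh); specialize (H3 h Hh); specialize (H4 h Hh); lra. Qed.



Lemma cmul_assoc_inv h x : h <> C0 -> Cmul (Cinv h) (Cmul h x) = x.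
Proof. intros H. transitivity (Cmul (Cmul (Cinv h) h) x); [ceq|]. rewrite Cinv_l; auto; ceq. Qed.
Lemma vscale_inv h X : h <> C0 -> vscale (Cinv h) (vscale h X) = X.
Proof. intros H. apply V4_ext; simpl; apply cmul_assoc_inv; auto. Qed.

Lemma quot_lemma (F : C -> V4) d q :
  (forall h, h <> C0 -> F h = vadd d (vscale h (q h))) -> Bv q ->
  forall eps, 0 < eps -> exists delta, 0 < delta /\
    forall h, h <> C0 -> Cnorm2 h < delta -> vnorm2 (vsub (F h) d) < eps.
Proof. intros HF [M HM] eps He.
  assert (M0 : 0 <= M) by (specialize (HM C0 ltac:(rewrite Cnorm2_C0; lra)); pose proof (vnorm2_nonneg (q C0)); lra).
  exists (Rmin 1 (eps / (M+1))). split.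
  - apply Rmin_glb_lt; [lra|]. apply Rdiv_lt_0_compat; lra.
  - intros h Hh Hd. pose proof (Rmin_l 1 (eps/(M+1))); pose proof (Rmin_r 1 (eps/(M+1))).
    rewrite HF by auto.
    replace (vsub (vadd d (vscale h (q h))) d) with (vscale h (q h)) by veq.
    rewrite vnorm2_scale. specialize (HM h ltac:(lra)). pose proof (Cnorm2_nonneg h).
    assert (Cnorm2 h * M <= Cnorm2 h * (M+1)) by nra.
    assert (Cnorm2 h * (M+1) < eps/(M+1) * (M+1)) by (apply Rmult_lt_compat_r; lra).
    replace (eps/(M+1)*(M+1)) with eps in * by (field; lra).
    pose proof (vnorm2_nonneg (q h)). nra.
Qed.

Lemma deriv_t phi a t d q :
  (forall h, vsub (phi a (Cadd t h)) (phi a t) = vscale h (vadd d (vscale h (q h)))) -> Bv q ->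
  has_pderiv_t phi a t d.
Proof. intros E B. unfold has_pderiv_t. apply (quot_lemma (fun h => vscale (Cinv h) (vsub (phi a (Cadd t h)) (phi a t))) d q); auto.
  intros h Hh; simpl. rewrite E, vscale_inv; auto. Qed.
Lemma deriv_a phi a t d q :
  (forall h, vsub (phi (Cadd a h) t) (phi a t) = vscale h (vadd d (vscale h (q h)))) -> Bv q ->
  has_pderiv_a phi a t d.
Proof. intros E B. unfold has_pderiv_a. apply (quot_lemma (fun h => vscale (Cinv h) (vsub (phi (Cadd a h) t) (phi a t))) d q); auto.
  intros h Hh; simpl. rewrite E, vscale_inv; auto. Qed.

Lemma lim_unique (F : C -> V4) d1 d2 :
  (forall eps, 0 < eps -> exists delta, 0 < delta /\ forall h, h <> C0 -> Cnorm2 h < delta -> vnorm2 (vsub (F h) d1) < eps) ->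
  (forall eps, 0 < eps -> exists delta, 0 < delta /\ forall h, h <> C0 -> Cnorm2 h < delta -> vnorm2 (vsub (F h) d2) < eps) ->
  d1 = d2.
Proof. intros H1 H2.
  assert (Z : vnorm2 (vsub d1 d2) = 0).
  { apply Rle_antisym; [|apply vnorm2_nonneg]. apply Rnot_lt_le; intro Hp.
    set (eps := vnorm2 (vsub d1 d2) / 4).
    destruct (H1 eps ltac:(unfold eps; lra)) as [r1 [Hr1 K1]]. destruct (H2 eps ltac:(unfold eps; lra)) as [r2 [Hr2 K2]].
    set (r := Rmin 1 (Rmin r1 r2) / 2).
    assert (Hr : 0 < r) by (unfold r; apply Rdiv_lt_0_compat; [apply Rmin_glb_lt; [lra|apply Rmin_glb_lt; lra]|lra]).
    assert (r <= 1/2 /\ r < r1 /\ r < r2).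
    { unfold r. pose proof (Rmin_l 1 (Rmin r1 r2)); pose proof (Rmin_r 1 (Rmin r1 r2));
      pose proof (Rmin_l r1 r2); pose proof (Rmin_r r1 r2); lra. }
    set (h := mkC r 0).
    assert (hn : h <> C0) by (intro E; injection E; lra).
    assert (hs : Cnorm2 h = r * r) by (unfold Cnorm2, h; simpl; ring).
    specialize (K1 h hn ltac:(rewrite hs; nra)). specialize (K2 h hn ltac:(rewrite hs; nra)).
    assert (Eq : vsub d1 d2 = vadd (vsub (F h) d2) (vscale (Copp C1) (vsub (F h) d1))) by veq.
    pose proof (vnorm2_add (vsub (F h) d2) (vscale (Copp C1) (vsub (F h) d1))).
    rewrite vnorm2_scale in H0. replace (Cnorm2 (Copp C1)) with 1 in H0 by (unfold Cnorm2; simpl; ring).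
    unfold eps in *. rewrite Eq in *. lra. }
  apply vnorm2_eq0 in Z.
  apply V4_ext; apply C_ext;
  match goal with |- ?f (?g d1) = _ => assert (W: f (g (vsub d1 d2)) = f (g V0)) by (rewrite Z; auto) end;
  simpl in W; lra.
Qed.

Lemma pderiv_t_unique phi a t d1 d2 : has_pderiv_t phi a t d1 -> has_pderiv_t phi a t d2 -> d1 = d2.
Proof. apply lim_unique. Qed.
Lemma pderiv_a_unique phi a t d1 d2 : has_pderiv_a phi a t d1 -> has_pderiv_a phi a t d2 -> d1 = d2.
Proof. apply lim_unique. Qed.


Definition dS_a (a t : C) := mkV4 C1 C0 (Cpow t 6) C0.
Definition dS_t (a t : C) := mkV4 C0 (Cmul (RtoC 4) (Cpow t 3)) (Cmul a (Cmul (RtoC 6) (Cpow t 5))) (Cmul (RtoC 7) (Cpow t 6)).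
Definition qS (a t : C) (h : C) := mkV4 C0
  (Cadd (Cmul (RtoC 6) (Cpow t 2)) (Cadd (Cmul (RtoC 4) (Cmul t h)) (Cpow h 2)))
  (Cmul a (Cadd (Cmul (RtoC 15) (Cpow t 4)) (Cadd (Cmul (RtoC 20) (Cmul (Cpow t 3) h))
     (Cadd (Cmul (RtoC 15) (Cmul (Cpow t 2) (Cpow h 2))) (Cadd (Cmul (RtoC 6) (Cmul t (Cpow h 3))) (Cpow h 4))))))
  (Cadd (Cmul (RtoC 21) (Cpow t 5)) (Cadd (Cmul (RtoC 35) (Cmul (Cpow t 4) h))
     (Cadd (Cmul (RtoC 35) (Cmul (Cpow t 3) (Cpow h 2))) (Cadd (Cmul (RtoC 21) (Cmul (Cpow t 2) (Cpow h 3)))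
       (Cadd (Cmul (RtoC 7) (Cmul t (Cpow h 4))) (Cpow h 5)))))).

Lemma S_da a t : has_pderiv_a phiS a t (dS_a a t).
Proof. apply (deriv_a _ _ _ _ (fun _ => V0)). intros h; unfold phiS, dS_a; veq.
  apply Bv_intro; simpl; bnd. Qed.
Lemma S_dt a t : has_pderiv_t phiS a t (dS_t a t).
Proof. apply (deriv_t _ _ _ _ (qS a t)). intros h; unfold phiS, dS_t, qS, RtoC; veq.
  apply Bv_intro; unfold qS; simpl; bnd. Qed.


Lemma Cnorm2_pow z k : Cnorm2 (Cpow z k) = Cnorm2 z ^ k.
Proof. induction k; simpl. unfold Cnorm2; simpl; ring. rewrite Cnorm2_mul, IHk; ring. Qed.
Lemma cconv_pow u l k : cconv u l -> cconv (fun n => Cpow (u n) k) (Cpow l k).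
Proof. intros H; induction k; simpl. apply cconv_const. apply cconv_mul; auto. Qed.
Lemma Cpow0 k : Cpow C0 (S k) = C0.
Proof. simpl. apply C_ext; simpl; ring. Qed.
Lemma neq0_norm z : 0 < Cnorm2 z -> z <> C0.
Proof. intros H E; rewrite E, Cnorm2_C0 in H; lra. Qed.

Lemma t_to_0 (t : nat -> C) : cconv (fun n => Cpow (t n) 4) C0 -> cconv t C0.
Proof. rewrite !cconv0_iff. intros H eps He.
  destruct (H (eps^4) ltac:(apply pow_lt; auto)) as [N HN]. exists N; intros n Hn.
  specialize (HN n Hn). rewrite Cnorm2_pow in HN. apply Rnot_le_lt; intro Hc.
  assert (eps ^ 4 <= Cnorm2 (t n) ^ 4) by (apply pow_incr; lra). lra. Qed.

Lemma tpS a t z : in_span2 (dS_a a t) (dS_t a t) z -> tangent_plane phiS a t z.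
Proof. intros H; exists (dS_a a t), (dS_t a t); split; [apply S_da|split; [apply S_dt|auto]]. Qed.

Definition e2' := mkV4 C0 (RtoC 4) C0 C0.

Lemma whitneyS : whitney_along_axis phiS.
Proof.
  intros p [p2 [p3 p4]] a t y c v e f P Q Hx Hy Hc Hyc Hv Hsec Hind Htan HP HQ.
  apply vconv_iff in Hc. destruct Hc as [Ha [Ht4 _]]. simpl in Ha, Ht4. rewrite p2 in Ht4.
  pose proof (t_to_0 t Ht4) as Ht.
  assert (tnz : forall n, t n <> C0).
  { intros n E. apply (Hx n). unfold on_axis, phiS; simpl; rewrite E; repeat split; apply C_ext; simpl; ring. }
  assert (S1 : in_span2 e f e1).
  { apply (span_limit P Q (fun n => dS_a (a n) (t n))); auto.
    - intros n. apply Htan, tpS. exists C1, C0; unfold dS_a; veq.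
    - apply vconv_iff; unfold dS_a, e1; cbn [v1 v2 v3 v4]; refine (conj _ (conj _ (conj _ _))); try apply cconv_const.
      rewrite <- (Cpow0 5). apply cconv_pow; auto. }
  assert (S2 : in_span2 e f e2').
  { apply (span_limit P Q (fun n => mkV4 C0 (RtoC 4) (Cmul (a n) (Cmul (RtoC 6) (Cpow (t n) 2))) (Cmul (RtoC 7) (Cpow (t n) 3)))); auto.
    - intros n. apply Htan, tpS. exists C0, (Cinv (Cpow (t n) 3)).
      assert (D : Cpow (t n) 3 <> C0).
      { apply neq0_norm. rewrite Cnorm2_pow. apply pow_lt, Cnorm2_pos, tnz. }
      apply V4_ext; simpl; unfold dS_a, dS_t; simpl.
      + apply C_ext; simpl; ring.
      + rewrite <- (cmul_assoc_inv _ (RtoC 4) D) at 1. apply C_ext; simpl; ring.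
      + rewrite <- (cmul_assoc_inv _ (Cmul (a n) (Cmul (RtoC 6) (Cpow (t n) 2))) D) at 1. apply C_ext; simpl; ring.
      + rewrite <- (cmul_assoc_inv _ (Cmul (RtoC 7) (Cpow (t n) 3)) D) at 1. apply C_ext; simpl; ring.
    - apply vconv_iff; unfold e2'; cbn [v1 v2 v3 v4]; refine (conj _ (conj _ (conj _ _))); try apply cconv_const.
      + replace C0 with (Cmul (v1 p) (Cmul (RtoC 6) (Cpow C0 2))) by (apply C_ext; simpl; ring).
        apply cconv_mul; auto. apply cconv_mul; [apply cconv_const|apply cconv_pow; auto].
      + replace C0 with (Cmul (RtoC 7) (Cpow C0 3)) by (apply C_ext; simpl; ring).
        apply cconv_mul; [apply cconv_const|apply cconv_pow; auto]. }
  apply vconv_iff in Hsec. destruct Hsec as [_ [Hs2 [Hs3 Hs4]]]. simpl in Hs2, Hs3, Hs4.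
  assert (V3 : v3 v = C0).
  { apply (cconv_unique _ _ _ Hs3).
    apply cconv_ext with (fun n => Cmul (Cmul (c n) (Cadd (Cpow (t n) 4) (Cmul (Copp C1) (v2 (y n))))) (Cmul (a n) (Cpow (t n) 2))).
    - intros n. destruct (Hy n) as [[y2 [y3 y4]] _]. rewrite y2, y3. apply C_ext; simpl; ring.
    - replace C0 with (Cmul (v2 v) (Cmul (v1 p) (Cpow C0 2))) by (apply C_ext; simpl; ring).
      apply cconv_mul; auto. apply cconv_mul; auto. apply cconv_pow; auto. }
  assert (V4' : v4 v = C0).
  { apply (cconv_unique _ _ _ Hs4).
    apply cconv_ext with (fun n => Cmul (Cmul (c n) (Cadd (Cpow (t n) 4) (Cmul (Copp C1) (v2 (y n))))) (Cpow (t n) 3)).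
    - intros n. destruct (Hy n) as [[y2 [y3 y4]] _]. rewrite y2, y4. apply C_ext; simpl; ring.
    - replace C0 with (Cmul (v2 v) (Cpow C0 3)) by (apply C_ext; simpl; ring).
      apply cconv_mul; auto. apply cconv_pow; auto. }
  split; auto.
  destruct S1 as [a1 [b1 E1]]. destruct S2 as [a2 [b2 E2]].
  assert (Ev : v = vadd (vscale (v1 v) e1) (vscale (Cmul (RtoC (1/4)) (v2 v)) e2')).
  { apply V4_ext; simpl; [apply C_ext; simpl; ring| apply C_ext; simpl; field | rewrite V3; apply C_ext; simpl; ring| rewrite V4'; apply C_ext; simpl; ring]. }
  exists (Cadd (Cmul (v1 v) a1) (Cmul (Cmul (RtoC (1/4)) (v2 v)) a2)),
         (Cadd (Cmul (v1 v) b1) (Cmul (Cmul (RtoC (1/4)) (v2 v)) b2)).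
  rewrite Ev at 1. rewrite E1, E2. veq.
Qed.


Lemma inv_eq D X Y : D <> C0 -> X = Cmul D Y -> Cmul (Cinv D) X = Y.
Proof. intros H E; rewrite E; apply cmul_assoc_inv; auto. Qed.

Lemma cancel2 b D x : D <> C0 -> Cmul (Cmul b D) (Cmul (Cinv D) x) = Cmul b x.
Proof. intros H. transitivity (Cmul b (Cmul (Cmul (Cinv D) D) x)); [ceq|]. rewrite Cinv_l; auto; ceq. Qed.

Lemma not_whitney phi DA DT
  (HA : forall a t, has_pderiv_a phi a t (DA a t)) (HT : forall a t, has_pderiv_t phi a t (DT a t))
  (t : nat -> C) (tnz : forall n, t n <> C0) p y c v e f :
  on_axis p ->
  (forall n, ~ on_axis (phi (t n) (t n))) -> (forall n, on_axis (y n) /\ y n <> p) ->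
  vconv (fun n => phi (t n) (t n)) p -> vconv y p -> v <> V0 ->
  vconv (fun n => vscale (c n) (vsub (phi (t n) (t n)) (y n))) v -> lin_indep2 e f ->
  vconv (fun n => DA (t n) (t n)) e ->
  vconv (fun n => vscale (Cinv (Cpow (t n) 2)) (DT (t n) (t n))) f ->
  ~ in_span2 e f v -> ~ whitney_along_axis phi.
Proof.
  intros Hp H1 H2 H3 H4 H5 H6 H7 H8 H9 H10 W.
  apply H10. refine (proj2 (W p Hp t t y c v e f _ _ H1 H2 H3 H4 H5 H6 H7 _ H8 H9)).
  intros n z. set (Dn := Cpow (t n) 2).
  assert (HD : Dn <> C0) by (apply neq0_norm; unfold Dn; rewrite Cnorm2_pow; apply pow_lt, Cnorm2_pos, tnz).
  split.
  - intros [da [dt [Ha [Ht [al [be E]]]]]].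
    rewrite (pderiv_a_unique _ _ _ _ _ Ha (HA _ _)) in E.
    rewrite (pderiv_t_unique _ _ _ _ _ Ht (HT _ _)) in E.
    exists al, (Cmul be Dn). rewrite E. apply V4_ext; simpl; f_equal; symmetry; apply cancel2; auto.
  - intros [al [be E]]. exists (DA (t n) (t n)), (DT (t n) (t n)). split; [auto|split; [auto|]].
    exists al, (Cmul be (Cinv Dn)). rewrite E. veq.
Qed.


Definition tseq (n : nat) : C := RtoC (/ INR (S n)).
Lemma tseq_nz n : tseq n <> C0.
Proof. intro E. pose proof (f_equal Re E) as H. unfold tseq, RtoC, C0 in H. cbn [Re] in H.
  pose proof (lt_0_INR (S n) ltac:(lia)).
  pose proof (Rinv_0_lt_compat _ H0). lra. Qed.
Lemma tseq_conv : cconv tseq C0.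
Proof. split; simpl.
  - apply (is_lim_seq_incr_1 (fun n => / INR n) (Finite 0)).
    replace (Finite 0) with (Rbar_inv p_infty) by reflexivity.
    apply is_lim_seq_inv; [apply is_lim_seq_INR|discriminate].
  - apply is_lim_seq_const. Qed.
Lemma cconv_mul0 u w m : cconv u C0 -> cconv w m -> cconv (fun n => Cmul (u n) (w n)) C0.
Proof. intros A B. replace C0 with (Cmul C0 m) by ceq. apply cconv_mul; auto. Qed.
Lemma cconv_mul0r u w m : cconv u m -> cconv w C0 -> cconv (fun n => Cmul (u n) (w n)) C0.
Proof. intros A B. replace C0 with (Cmul m C0) by ceq. apply cconv_mul; auto. Qed.
Lemma cconv_pow0 u k : cconv u C0 -> cconv (fun n => Cpow (u n) (S k)) C0.
Proof. intros A. rewrite <- (Cpow0 k). apply cconv_pow; auto. Qed.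
Lemma pow_nz z k : z <> C0 -> Cpow z k <> C0.
Proof. intros H. apply neq0_norm. rewrite Cnorm2_pow; apply pow_lt, Cnorm2_pos, H. Qed.

Ltac vsplit := apply vconv_iff; cbn [v1 v2 v3 v4]; refine (conj _ (conj _ (conj _ _))).

Definition DAtau (a t : C) := mkV4 C1 C0 (Cpow t 2) C0.
Definition DTtau (a t : C) := mkV4 C0 (Cmul (RtoC 4) (Cpow t 3)) (Cmul a (Cmul (RtoC 2) t)) (Cmul (RtoC 3) (Cpow t 2)).
Lemma tau_da a t : has_pderiv_a phiTau a t (DAtau a t).
Proof. apply (deriv_a _ _ _ _ (fun _ => V0)). intros h; unfold phiTau, DAtau; veq.
  apply Bv_intro; simpl; bnd. Qed.
Lemma tau_dt a t : has_pderiv_t phiTau a t (DTtau a t).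
Proof. apply (deriv_t _ _ _ _ (fun h => mkV4 C0 (Cadd (Cmul (RtoC 6) (Cpow t 2)) (Cadd (Cmul (RtoC 4) (Cmul t h)) (Cpow h 2)))
   a (Cadd (Cmul (RtoC 3) t) h))). intros h; unfold phiTau, DTtau, RtoC; veq.
  apply Bv_intro; simpl; bnd. Qed.

Lemma tau_fail : ~ whitney_along_axis phiTau.
Proof.
  pose proof tseq_conv as T0. pose proof tseq_nz as Tn.
  apply (not_whitney phiTau DAtau DTtau tau_da tau_dt tseq tseq_nz V0
    (fun n => mkV4 (tseq n) C0 C0 C0) (fun n => Cinv (Cpow (tseq n) 3))
    (mkV4 C0 C0 C1 C1) e1 (mkV4 C0 C0 (RtoC 2) (RtoC 3))).
  - repeat split.
  - intros n [H _]. simpl in H. apply (pow_nz (tseq n) 4 (Tn n)), H.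
  - intros n; split; [repeat split|]. intro E. apply (Tn n). change (tseq n) with (v1 (mkV4 (tseq n) C0 C0 C0)). rewrite E; auto.
  - unfold phiTau; vsplit; auto.
    + apply cconv_pow0; auto.
    + apply (cconv_mul0 _ _ C0); auto. apply cconv_pow0; auto.
    + apply cconv_pow0; auto.
  - vsplit; auto; apply cconv_const.
  - intro E; injection E; lra.
  - unfold vscale, vsub, vadd, phiTau; vsplit.
    + apply cconv_ext with (fun _ => C0); [intros n; ceq|apply cconv_const].
    + apply cconv_ext with tseq; auto. intros n; symmetry; apply inv_eq; [apply pow_nz; auto|ceq].
    + apply cconv_ext with (fun _ => C1); [|apply cconv_const]. intros n; symmetry; apply inv_eq; [apply pow_nz; auto|ceq].
    + apply cconv_ext with (fun _ => C1); [|apply cconv_const]. intros n; symmetry; apply inv_eq; [apply pow_nz; auto|ceq].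
  - intros al be E. injection E; intros. split; apply C_ext; simpl; lra.
  - unfold DAtau; vsplit; try apply cconv_const. apply cconv_pow0; auto.
  - unfold vscale, DTtau; vsplit.
    + apply cconv_ext with (fun _ => C0); [intros n; ceq|apply cconv_const].
    + apply cconv_ext with (fun n => Cmul (RtoC 4) (tseq n)).
      * intros n; symmetry; apply inv_eq; [apply pow_nz; auto|ceq].
      * apply (cconv_mul0r _ _ (RtoC 4)); auto; apply cconv_const.
    + apply cconv_ext with (fun _ => RtoC 2); [|apply cconv_const]. intros n; symmetry; apply inv_eq; [apply pow_nz; auto|ceq].
    + apply cconv_ext with (fun _ => RtoC 3); [|apply cconv_const]. intros n; symmetry; apply inv_eq; [apply pow_nz; auto|ceq].
  - intros [al [be E]]. injection E; intros. lra.
Qed.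


Definition DAsig (a t : C) := mkV4 C1 C0 (Cmul (RtoC (3/2)) (Cpow t 2)) C0.
Definition DTsig (a t : C) := mkV4 C0 (Cmul (RtoC 4) (Cpow t 3))
  (Cmul (RtoC (3/2)) (Cmul a (Cmul (RtoC 2) t))) (Cmul (RtoC (7/4)) (Cmul (RtoC 3) (Cpow t 2))).
Lemma sig_da a t : has_pderiv_a phiSigma a t (DAsig a t).
Proof. apply (deriv_a _ _ _ _ (fun _ => V0)). intros h; unfold phiSigma, DAsig, RtoC; veq.
  apply Bv_intro; simpl; bnd. Qed.
Lemma sig_dt a t : has_pderiv_t phiSigma a t (DTsig a t).
Proof. apply (deriv_t _ _ _ _ (fun h => mkV4 C0 (Cadd (Cmul (RtoC 6) (Cpow t 2)) (Cadd (Cmul (RtoC 4) (Cmul t h)) (Cpow h 2)))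
   (Cmul (RtoC (3/2)) a) (Cmul (RtoC (7/4)) (Cadd (Cmul (RtoC 3) t) h)))). intros h; unfold phiSigma, DTsig, RtoC; veq.
  apply Bv_intro; simpl; bnd. Qed.

Lemma sig_fail : ~ whitney_along_axis phiSigma.
Proof.
  pose proof tseq_conv as T0. pose proof tseq_nz as Tn.
  apply (not_whitney phiSigma DAsig DTsig sig_da sig_dt tseq tseq_nz V0
    (fun n => mkV4 (tseq n) C0 C0 C0) (fun n => Cinv (Cpow (tseq n) 3))
    (mkV4 C0 C0 (RtoC (3/2)) (RtoC (7/4))) e1
    (mkV4 C0 C0 (Cmul (RtoC (3/2)) (RtoC 2)) (Cmul (RtoC (7/4)) (RtoC 3)))).
  - repeat split.
  - intros n [H _]. simpl in H. apply (pow_nz (tseq n) 4 (Tn n)), H.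
  - intros n; split; [repeat split|]. intro E. apply (Tn n). change (tseq n) with (v1 (mkV4 (tseq n) C0 C0 C0)). rewrite E; auto.
  - unfold phiSigma; vsplit; auto.
    + apply cconv_pow0; auto.
    + apply (cconv_mul0r _ _ (RtoC (3/2))); [apply cconv_const|]. apply (cconv_mul0 _ _ C0); auto. apply cconv_pow0; auto.
    + apply (cconv_mul0r _ _ (RtoC (7/4))); [apply cconv_const|]. apply cconv_pow0; auto.
  - vsplit; auto; apply cconv_const.
  - intro E. pose proof (f_equal (fun x => Re (v3 x)) E) as K. unfold RtoC, V0, C0 in K. cbn in K. lra.
  - unfold vscale, vsub, vadd, phiSigma; vsplit.
    + apply cconv_ext with (fun _ => C0); [intros n; ceq|apply cconv_const].
    + apply cconv_ext with tseq; auto. intros n; symmetry; apply inv_eq; [apply pow_nz; auto|ceq].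
    + apply cconv_ext with (fun _ => RtoC (3/2)); [|apply cconv_const]. intros n; symmetry; apply inv_eq; [apply pow_nz; auto|unfold RtoC; ceq].
    + apply cconv_ext with (fun _ => RtoC (7/4)); [|apply cconv_const]. intros n; symmetry; apply inv_eq; [apply pow_nz; auto|unfold RtoC; ceq].
  - intros al be E. injection E; intros. split; apply C_ext; simpl; lra.
  - unfold DAsig; vsplit; try apply cconv_const. apply (cconv_mul0r _ _ (RtoC (3/2))); [apply cconv_const|]. apply cconv_pow0; auto.
  - unfold vscale, DTsig; vsplit.
    + apply cconv_ext with (fun _ => C0); [intros n; ceq|apply cconv_const].
    + apply cconv_ext with (fun n => Cmul (RtoC 4) (tseq n)).
      * intros n; symmetry; apply inv_eq; [apply pow_nz; auto|ceq].
      * apply (cconv_mul0r _ _ (RtoC 4)); auto; apply cconv_const.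
    + apply cconv_ext with (fun _ => Cmul (RtoC (3/2)) (RtoC 2)); [|apply cconv_const]. intros n; symmetry; apply inv_eq; [apply pow_nz; auto|unfold RtoC; ceq].
    + apply cconv_ext with (fun _ => Cmul (RtoC (7/4)) (RtoC 3)); [|apply cconv_const]. intros n; symmetry; apply inv_eq; [apply pow_nz; auto|unfold RtoC; ceq].
  - intros [al [be E]]. injection E; intros. lra.
Qed.


Theorem mainTheorem11 :
  whitney_along_axis phiS /\
  ~ whitney_along_axis phiTau /\
  ~ whitney_along_axis phiSigma.
Proof.
  split; [exact whitneyS|split; [exact tau_fail|exact sig_fail]].
Qed.
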